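(* Let $k>0$ be sufficiently large and let $\theta^{(1)}$ be the angle function of the most contracted direction $e^{(1)}(y)=(\cos\theta^{(1)}(y),\sin\theta^{(1)}(y))$ of the standard map defined below. Then $\theta^{(1)}$ is strictly decreasing on $[0,1/2]$ ($e^{(1)}$ rotates clockwise) and strictly increasing on $[1/2,1]$ ($e^{(1)}$ rotates counter-clockwise); $\theta^{(1)}(0)=\theta^{(1)}(1)=\pi+\tfrac12\tan^{-1}\varphi(0)$ is close to $\pi$ (within order $1/k$, $e^{(1)}$ near the negative horizontal semi-axis) and $\theta^{(1)}(1/2)=\tfrac12\tan^{-1}\varphi(1/2)$ is close to $0$ (within order $1/k$, $e^{(1)}$ near the positive horizontal semi-axis); $e^{(1)}$ is along the negative diagonal ($\theta^{(1)}=3\pi/4$) at $y=\delta^-$ and $y=1-\delta^-$, vertical ($\theta^{(1)}=\pi/2$) at $y=\delta^*$ and $y=1-\delta^*$, and along the positive diagonal ($\theta^{(1)}=\pi/4$) at $y=\delta^+$ and $y=1-\delta^+$.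
   Context: Standard map $f_k(x,y)=(x+k\sin(2\pi y),\,x+y+k\sin(2\pi y))\bmod 1$; $\psi_c(y)=2\pi k\cos(2\pi y)$; $\varphi(y)=-\frac{4\psi_c+2}{2\psi_c^2+2\psi_c-1}$. $\delta^*=\frac1{2\pi}\cos^{-1}(-\frac{1}{4\pi k})$, $\delta^{\pm}=\frac1{2\pi}\cos^{-1}(-\frac{1\pm\sqrt3}{4\pi k})$, with $\cos^{-1}\in[0,\pi]$, $\tan^{-1}\in[-\pi/2,\pi/2]$ (and $\tan^{-1}(\pm\infty)=\pm\pi/2$). The angle function is $\theta^{(1)}(y)=\pi+\frac12\tan^{-1}\varphi(y)$ for $y\in[0,\delta^-]\cup[1-\delta^-,1]$, $\frac\pi2+\frac12\tan^{-1}\varphi(y)$ for $y\in[\delta^-,\delta^+]\cup[1-\delta^+,1-\delta^-]$, and $\frac12\tan^{-1}\varphi(y)$ for $y\in[\delta^+,1-\delta^+]$; for large $k$ the vector $(\cos\theta^{(1)},\sin\theta^{(1)})$ spans the most contracted direction of $Df_k$ at points with second coordinate $y$. *)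

(* Defs.v *)
From Stdlib Require Import Reals.
From Coquelicot Require Import Coquelicot.
Open Scope R_scope.

Definition psi_c (k y : R) : R := 2 * PI * k * cos (2 * PI * y).

Definition varphi (k y : R) : R :=
  - (4 * psi_c k y + 2) / (2 * (psi_c k y) ^ 2 + 2 * psi_c k y - 1).

Definition delta_star (k : R) : R := / (2 * PI) * acos (- (1 / (4 * PI * k))).
Definition delta_plus (k : R) : R := / (2 * PI) * acos (- ((1 + sqrt 3) / (4 * PI * k))).
Definition delta_minus (k : R) : R := / (2 * PI) * acos (- ((1 - sqrt 3) / (4 * PI * k))).

(* The piecewise formula of the paper (at the overlapping endpoints the
   first listed branch is used; this is overridden at the poles below). *)
Definition theta_formula (k y : R) : R :=
  if Rle_dec y (delta_minus k) then PI + / 2 * atan (varphi k y)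
  else if Rle_dec y (delta_plus k) then PI / 2 + / 2 * atan (varphi k y)
  else if Rle_dec y (1 - delta_plus k) then / 2 * atan (varphi k y)
  else if Rle_dec y (1 - delta_minus k) then PI / 2 + / 2 * atan (varphi k y)
  else PI + / 2 * atan (varphi k y).

(* Poles of varphi in [0,1]: there the denominator vanishes and varphi = +-oo;
   the paper's convention tan^{-1}(+-oo) = +-pi/2 is the one-sided limit of
   tan^{-1}(varphi) along the branch. *)
Definition is_pole (k y : R) : Prop :=
  y = delta_minus k \/ y = delta_plus k \/ y = 1 - delta_plus k \/ y = 1 - delta_minus k.

Definition left_limit (f : R -> R) (x : R) : R :=
  iota (fun L : R => filterlim f (at_left x) (locally L)).

Definition theta1 (k y : R) : R :=
  if Req_EM_T y (delta_minus k) then left_limit (theta_formula k) y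
  else if Req_EM_T y (delta_plus k) then left_limit (theta_formula k) y
  else if Req_EM_T y (1 - delta_plus k) then left_limit (theta_formula k) y
  else if Req_EM_T y (1 - delta_minus k) then left_limit (theta_formula k) y
  else theta_formula k y.

(* Main.v *)
Require Import Defs.
From Stdlib Require Import Reals Lra Psatz.
From Coquelicot Require Import Coquelicot.
Open Scope R_scope.

Definition s3 := sqrt 3.
Definition rA := (s3 - 1) / 2.
Definition rB := - (1 + s3) / 2.
Definition fphi (p : R) : R := - (4 * p + 2) / (2 * p ^ 2 + 2 * p - 1).

Lemma s3_facts : s3 * s3 = 3 /\ 17/10 < s3 < 18/10.
Proof.
  assert (h : s3 * s3 = 3) by (unfold s3; apply sqrt_sqrt; lra).
  assert (h0 : 0 <= s3) by (unfold s3; apply sqrt_pos).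
  split; [exact h | split; nra].
Qed.

Lemma varphi_eq k y : varphi k y = fphi (psi_c k y).
Proof. reflexivity. Qed.

Lemma D_fact p : 2 * p ^ 2 + 2 * p - 1 = 2 * (p - rA) * (p - rB).
Proof. destruct s3_facts as [h _]. unfold rA, rB. nra. Qed.

Lemma fphi_diff a b : 2 * a ^ 2 + 2 * a - 1 <> 0 -> 2 * b ^ 2 + 2 * b - 1 <> 0 ->
  fphi b - fphi a = 4 * (b - a) * (2*a*b + a + b + 2) /
     ((2 * a ^ 2 + 2 * a - 1) * (2 * b ^ 2 + 2 * b - 1)).
Proof. intros. unfold fphi. field. split; auto. Qed.

Lemma div_pos_lt x y : 0 < x -> 0 < y -> 0 < x / y.
Proof. intros. unfold Rdiv. apply Rmult_lt_0_compat; auto. apply Rinv_0_lt_compat; auto. Qed.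

Lemma fphi_incr_gen a b : a < b ->
  0 < (2 * a ^ 2 + 2 * a - 1) * (2 * b ^ 2 + 2 * b - 1) ->
  0 < 2*a*b + a + b + 2 -> fphi a < fphi b.
Proof.
  intros hab hD hq.
  assert (ha : 2 * a ^ 2 + 2 * a - 1 <> 0) by (intro e; rewrite e in hD; lra).
  assert (hb : 2 * b ^ 2 + 2 * b - 1 <> 0) by (intro e; rewrite e in hD; lra).
  pose proof (fphi_diff a b ha hb) as e.
  assert (0 < 4 * (b - a) * (2*a*b + a + b + 2) / ((2 * a ^ 2 + 2 * a - 1) * (2 * b ^ 2 + 2 * b - 1))).
  { apply div_pos_lt; auto. apply Rmult_lt_0_compat; lra. }
  lra.
Qed.

Lemma fphi_incr1 a b : a < b -> b < rB -> fphi a < fphi b.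
Proof.
  intros. destruct s3_facts as [h [h1 h2]]. apply fphi_incr_gen; auto.
  - rewrite !D_fact. unfold rA, rB in *.
    assert (0 < (a - (s3-1)/2) * (a - - (1 + s3) / 2)) by nra.
    assert (0 < (b - (s3-1)/2) * (b - - (1 + s3) / 2)) by nra. nra.
  - unfold rB in *. assert (0 < (2*a+1)*(2*b+1)) by nra. nra.
Qed.

Lemma fphi_incr3 a b : rA < a -> a < b -> fphi a < fphi b.
Proof.
  intros. destruct s3_facts as [h [h1 h2]]. apply fphi_incr_gen; auto.
  - rewrite !D_fact. unfold rA, rB in *.
    assert (0 < (a - (s3-1)/2) * (a - - (1 + s3) / 2)) by nra.
    assert (0 < (b - (s3-1)/2) * (b - - (1 + s3) / 2)) by nra. nra.
  - unfold rA in *. assert (0 < (2*a+1)*(2*b+1)) by nra. nra.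
Qed.

Lemma fphi_incr2 a b : rB < a -> a < b -> b < rA -> fphi a < fphi b.
Proof.
  intros. destruct s3_facts as [h [h1 h2]]. apply fphi_incr_gen; auto.
  - rewrite !D_fact. unfold rA, rB in *.
    assert ((a - (s3-1)/2) * (a - - (1 + s3) / 2) < 0) by nra.
    assert ((b - (s3-1)/2) * (b - - (1 + s3) / 2) < 0) by nra. nra.
  - unfold rA, rB in *.
    assert (0 < (s3 - (2*a+1))*(s3 - (2*b+1))) by nra.
    assert (0 < (s3 + (2*a+1))*(s3 + (2*b+1))) by nra. nra.
Qed.

Definition Hth (p : R) : R :=
  if Rlt_dec p rB then / 2 * atan (fphi p)
  else if Rlt_dec rB p then
    (if Rlt_dec p rA then PI / 2 + / 2 * atan (fphi p)
     else if Rlt_dec rA p then PI + / 2 * atan (fphi p)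
     else 3 * PI / 4)
  else PI / 4.

Lemma rB_lt_rA : rB < rA.
Proof. destruct s3_facts as [h [h1 h2]]. unfold rA, rB. lra. Qed.

Lemma H_incr a b : a < b -> Hth a < Hth b.
Proof.
  intros hab. pose proof rB_lt_rA. pose proof PI_RGT_0.
  pose proof (atan_bound (fphi a)). pose proof (atan_bound (fphi b)).
  unfold Hth.
  destruct (Rlt_dec a rB); destruct (Rlt_dec b rB);
  try destruct (Rlt_dec rB a); try destruct (Rlt_dec rB b);
  try destruct (Rlt_dec a rA); try destruct (Rlt_dec b rA);
  try destruct (Rlt_dec rA a); try destruct (Rlt_dec rA b);
  try lra;
  try (pose proof (atan_increasing _ _ (fphi_incr1 a b hab ltac:(lra))); lra);
  try (pose proof (atan_increasing _ _ (fphi_incr2 a b ltac:(lra) hab ltac:(lra))); lra);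
  try (pose proof (atan_increasing _ _ (fphi_incr3 a b ltac:(lra) hab)); lra).
Qed.

Lemma quot_big M X Y : 0 < Y -> Rabs M * Y < X -> M < X / Y.
Proof.
  intros hY h. apply Rmult_lt_reg_r with Y; auto.
  unfold Rdiv. rewrite Rmult_assoc, Rinv_l by lra. rewrite Rmult_1_r.
  pose proof (Rle_abs M). nra.
Qed.

Definition eta_of (M : R) := / (4 * Rabs M + 4).

Lemma eta_facts M : 0 < eta_of M /\ eta_of M <= 1/4 /\ Rabs M * eta_of M < 1/4.
Proof.
  unfold eta_of. pose proof (Rabs_pos M).
  assert (0 < / (4 * Rabs M + 4)) by (apply Rinv_0_lt_compat; lra).
  assert (e : (4 * Rabs M + 4) * / (4 * Rabs M + 4) = 1) by (field; lra).
  repeat split; nra.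
Qed.

Lemma fA_above M : forall p, rA < p < rA + eta_of M -> fphi p < - M.
Proof.
  intros p hp. destruct (eta_facts M) as [e1 [e2 e3]]. destruct s3_facts as [h [h1 h2]].
  pose proof (Rabs_pos M).
  set (u := p - rA) in *.
  assert (ep : p = rA + u) by (unfold u; ring). rewrite ep.
  assert (fphi (rA + u) = - ((4*u + 2*s3) / (2*u*(u+s3)))).
  { unfold fphi. rewrite D_fact. replace (rA+u-rA) with u by ring. replace (rA+u-rB) with (u+s3) by (unfold rA, rB; field). replace (4*(rA+u)+2) with (4*u+2*s3) by (unfold rA; field). field. split; nra. }
  rewrite H0. apply Ropp_lt_contravar. apply quot_big. nra.
  assert (Rabs M * (2 * u * (u + s3)) <= Rabs M * (2 * eta_of M * (1/4 + 2))) by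
    (apply Rmult_le_compat_l; nra). nra.
Qed.

Lemma fA_below M : forall p, rA - eta_of M < p < rA -> M < fphi p.
Proof.
  intros p hp. destruct (eta_facts M) as [e1 [e2 e3]]. destruct s3_facts as [h [h1 h2]].
  pose proof (Rabs_pos M).
  set (u := rA - p) in *.
  assert (ep : p = rA - u) by (unfold u; ring). rewrite ep.
  assert (fphi (rA - u) = (2*s3 - 4*u) / (2*u*(s3 - u))).
  { unfold fphi. rewrite D_fact. replace (rA-u-rA) with (-u) by ring. replace (rA-u-rB) with (s3-u) by (unfold rA, rB; field). replace (4*(rA-u)+2) with (2*s3-4*u) by (unfold rA; field). field. split; nra. }
  rewrite H0. apply quot_big. nra.
  assert (Rabs M * (2 * u * (s3 - u)) <= Rabs M * (2 * eta_of M * 2)) by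
    (apply Rmult_le_compat_l; nra). nra.
Qed.

Lemma fB_above M : forall p, rB < p < rB + eta_of M -> fphi p < - M.
Proof.
  intros p hp. destruct (eta_facts M) as [e1 [e2 e3]]. destruct s3_facts as [h [h1 h2]].
  pose proof (Rabs_pos M).
  set (u := p - rB) in *.
  assert (ep : p = rB + u) by (unfold u; ring). rewrite ep.
  assert (fphi (rB + u) = - ((2*s3 - 4*u) / (2*u*(s3 - u)))).
  { unfold fphi. rewrite D_fact. replace (rB+u-rB) with u by ring. replace (rB+u-rA) with (u-s3) by (unfold rA, rB; field). replace (4*(rB+u)+2) with (4*u-2*s3) by (unfold rB; field). field. split; nra. }
  rewrite H0. apply Ropp_lt_contravar. apply quot_big. nra.
  assert (Rabs M * (2 * u * (s3 - u)) <= Rabs M * (2 * eta_of M * 2)) by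
    (apply Rmult_le_compat_l; nra). nra.
Qed.

Lemma fB_below M : forall p, rB - eta_of M < p < rB -> M < fphi p.
Proof.
  intros p hp. destruct (eta_facts M) as [e1 [e2 e3]]. destruct s3_facts as [h [h1 h2]].
  pose proof (Rabs_pos M).
  set (u := rB - p) in *.
  assert (ep : p = rB - u) by (unfold u; ring). rewrite ep.
  assert (fphi (rB - u) = (4*u + 2*s3) / (2*u*(u+s3))).
  { unfold fphi. rewrite D_fact. replace (rB-u-rB) with (-u) by ring. replace (rB-u-rA) with (-u-s3) by (unfold rA, rB; field). replace (4*(rB-u)+2) with (-4*u-2*s3) by (unfold rB; field). field. split; nra. }
  rewrite H0. apply quot_big. nra.
  assert (Rabs M * (2 * u * (u + s3)) <= Rabs M * (2 * eta_of M * (1/4 + 2))) by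
    (apply Rmult_le_compat_l; nra). nra.
Qed.

Lemma ball_R (x e y : R) : ball x e y <-> Rabs (y - x) < e.
Proof. unfold ball; simpl; unfold AbsRing_ball, abs, minus, plus, opp; simpl. tauto. Qed.

Lemma psi_cont k p : forall eps, 0 < eps -> exists d, 0 < d /\
  forall y, Rabs (y - p) < d -> Rabs (psi_c k y - psi_c k p) < eps.
Proof.
  intros eps heps.
  assert (Hc0 : continuity_pt (psi_c k) p).
  { unfold psi_c. reg. }
  pose proof (proj1 (continuity_pt_filterlim _ _) Hc0) as Hc.
  pose proof (proj1 (@filterlim_locally R R_UniformSpace (locally p) _ (psi_c k) (psi_c k p)) Hc (mkposreal eps heps)) as [d Hd].
  exists d. split; [apply cond_pos|]. intros y hy.
  apply ball_R. apply Hd. apply ball_R. exact hy.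
Qed.

Lemma LL k p A s : (s = 1 \/ s = -1) ->
  (exists e0, 0 < e0 /\ forall y, p - e0 < y < p -> theta_formula k y = A + / 2 * atan (varphi k y)) ->
  (forall M, exists e, 0 < e /\ forall y, p - e < y < p -> M < s * varphi k y) ->
  left_limit (theta_formula k) p = A + s * PI / 4.
Proof.
  intros hs [e0 [he0 h1]] h2.
  unfold left_limit. apply (@iota_filterlim_locally R_AbsRing R_CompleteNormedModule).
  { apply Proper_StrongProper. apply at_left_proper_filter. }
  apply filterlim_locally. intros [eps heps]. simpl.
  set (t := Rmin eps 1).
  assert (ht : 0 < t /\ t <= eps /\ t <= 1) by (unfold t; split; [apply Rmin_pos; lra | split; [apply Rmin_l | apply Rmin_r]]).
  pose proof PI2_3_2.
  destruct (h2 (tan (PI/2 - t))) as [e [he hy]].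
  assert (hat : atan (tan (PI/2 - t)) = PI/2 - t) by (apply atan_tan; lra).
  assert (hm : 0 < Rmin e e0) by (apply Rmin_pos; lra).
  exists (mkposreal _ hm). intros y hyb hyl. simpl in hyb.
  apply ball_R in hyb. apply ball_R.
  assert (hr : Rabs (y - p) < e /\ Rabs (y - p) < e0).
  { split; eapply Rlt_le_trans; [exact hyb | apply Rmin_l | exact hyb | apply Rmin_r]. }
  destruct hr as [hr1 hr2].
  rewrite Rabs_left in hr1, hr2 by lra.
  rewrite h1 by lra.
  pose proof (hy y ltac:(lra)) as hM.
  pose proof (atan_bound (varphi k y)).
  destruct hs as [-> | ->].
  - rewrite Rmult_1_l in hM. pose proof (atan_increasing _ _ hM). rewrite hat in H1.
    rewrite Rabs_left by lra. lra.
  - replace (-1 * varphi k y) with (- varphi k y) in hM by ring.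
    pose proof (atan_increasing _ _ hM). rewrite hat, atan_opp in H1.
    rewrite Rabs_right by lra. lra.
Qed.

Lemma cos_2PI_minus x : cos (2 * PI - x) = cos x.
Proof. rewrite cos_minus, cos_2PI, sin_2PI. ring. Qed.

Section CS.
Variables (k r : R).
Hypothesis hk : 0 < k.
Hypothesis hr : - (2 * PI * k) < r < 2 * PI * k.
Let d := / (2 * PI) * acos (r / (2 * PI * k)).

Lemma cs_c : -1 < r / (2 * PI * k) < 1.
Proof.
  pose proof PI_RGT_0. assert (0 < 2*PI*k) by (apply Rmult_lt_0_compat; lra).
  assert (e : r / (2*PI*k) * (2*PI*k) = r) by (field; lra).
  split; apply Rmult_lt_reg_r with (2*PI*k); auto; rewrite e; lra.
Qed.

Lemma cs_2pid : 2 * PI * d = acos (r / (2 * PI * k)).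
Proof. unfold d. pose proof PI_RGT_0. field. lra. Qed.

Lemma cs_range : 0 < d < 1/2.
Proof.
  pose proof PI_RGT_0. pose proof (acos_bound_lt _ cs_c). pose proof cs_2pid.
  split; nra.
Qed.

Lemma cs_val : psi_c k d = r.
Proof.
  unfold psi_c. rewrite cs_2pid, cos_acos by (pose proof cs_c; lra).
  pose proof PI_RGT_0. field. lra.
Qed.

Lemma cs_val2 : psi_c k (1 - d) = r.
Proof.
  rewrite <- cs_val. unfold psi_c. f_equal.
  replace (2 * PI * (1 - d)) with (2 * PI - 2 * PI * d) by ring. apply cos_2PI_minus.
Qed.


Lemma cs_left1 y : 0 <= y -> y < d -> r < psi_c k y.
Proof.
  intros. rewrite <- cs_val. unfold psi_c. pose proof PI_RGT_0. pose proof cs_range.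
  apply Rmult_lt_compat_l; [nra|].
  apply cos_decreasing_1; nra.
Qed.

Lemma cs_left2 y : d < y -> y <= 1/2 -> psi_c k y < r.
Proof.
  intros. rewrite <- cs_val. unfold psi_c. pose proof PI_RGT_0. pose proof cs_range.
  apply Rmult_lt_compat_l; [nra|].
  apply cos_decreasing_1; nra.
Qed.

Lemma cs_right1 y : 1/2 <= y -> y < 1 - d -> psi_c k y < r.
Proof.
  intros. rewrite <- cs_val2. unfold psi_c. pose proof PI_RGT_0. pose proof cs_range.
  apply Rmult_lt_compat_l; [nra|].
  apply cos_increasing_1; nra.
Qed.

Lemma cs_right2 y : 1 - d < y -> y <= 1 -> r < psi_c k y.
Proof.
  intros. rewrite <- cs_val2. unfold psi_c. pose proof PI_RGT_0. pose proof cs_range.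
  apply Rmult_lt_compat_l; [nra|].
  apply cos_increasing_1; nra.
Qed.
End CS.

Lemma H_1 p : p < rB -> Hth p = / 2 * atan (fphi p).
Proof. intros. pose proof rB_lt_rA. unfold Hth. destruct (Rlt_dec p rB); [reflexivity|lra]. Qed.
Lemma H_3 p : rB < p < rA -> Hth p = PI / 2 + / 2 * atan (fphi p).
Proof. intros. unfold Hth. destruct (Rlt_dec p rB); [lra|]. destruct (Rlt_dec rB p); [|lra].
  destruct (Rlt_dec p rA); [reflexivity|lra]. Qed.
Lemma H_5 p : rA < p -> Hth p = PI + / 2 * atan (fphi p).
Proof. intros. pose proof rB_lt_rA. unfold Hth. destruct (Rlt_dec p rB); [lra|]. destruct (Rlt_dec rB p); [|lra].
  destruct (Rlt_dec p rA); [lra|]. destruct (Rlt_dec rA p); [reflexivity|lra]. Qed.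
Lemma H_rA : Hth rA = 3 * PI / 4.
Proof. pose proof rB_lt_rA. unfold Hth. destruct (Rlt_dec rA rB); [lra|]. destruct (Rlt_dec rB rA); [|lra].
  destruct (Rlt_dec rA rA); [lra|]. destruct (Rlt_dec rA rA); [lra|reflexivity]. Qed.
Lemma H_rB : Hth rB = PI / 4.
Proof. unfold Hth. destruct (Rlt_dec rB rB); [lra|]. destruct (Rlt_dec rB rB); [lra|reflexivity]. Qed.

Lemma atan_abs x : Rabs (atan x) <= Rabs x.
Proof.
  assert (pos : forall x, 0 < x -> 0 <= atan x <= x).
  { intros z hz.
    destruct (MVT_cor1 atan 0 z (fun t => derivable_pt_atan t) hz) as [c [hc _]].
    rewrite derive_pt_atan, atan_0 in hc.
    assert (0 < 1 + c²) by (pose proof (Rle_0_sqr c); lra).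
    assert (1 / (1 + c²) <= 1).
    { unfold Rdiv. rewrite Rmult_1_l. rewrite <- Rinv_1. apply Rinv_le_contravar; [lra|].
      pose proof (Rle_0_sqr c); lra. }
    assert (0 <= 1 / (1 + c²)) by (unfold Rdiv; rewrite Rmult_1_l; left; apply Rinv_0_lt_compat; lra).
    split; nra. }
  destruct (Rtotal_order x 0) as [h|[h|h]].
  - pose proof (pos (-x) ltac:(lra)) as hp. rewrite atan_opp in hp.
    rewrite (Rabs_left1 (atan x)) by lra. rewrite (Rabs_left x) by lra. lra.
  - subst. rewrite atan_0. lra.
  - pose proof (pos x h). rewrite !Rabs_right by lra. lra.
Qed.

Lemma div_le_inv X Y k : 0 < Y -> 0 < k -> X * k <= Y -> X / Y <= 1 / k.
Proof.
  intros. assert (X / Y - 1 / k = (X * k - Y) / (Y * k)) by (field; lra).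
  assert ((X * k - Y) / (Y * k) <= 0).
  { unfold Rdiv. apply Rmult_le_0_r; [lra|]. left. apply Rinv_0_lt_compat. nra. }
  lra.
Qed.

Section Main.
Variable k : R.
Hypothesis hk : 1 <= k.

Lemma kpos : 0 < k. Proof. lra. Qed.

Lemma rng r : -2 <= r <= 2 -> - (2 * PI * k) < r < 2 * PI * k.
Proof. intros. pose proof PI_RGT_0. pose proof PI2_3_2. nra. Qed.

Lemma rA_rng : - (2 * PI * k) < rA < 2 * PI * k.
Proof. apply rng. destruct s3_facts as [_ [h1 h2]]. unfold rA. lra. Qed.
Lemma rB_rng : - (2 * PI * k) < rB < 2 * PI * k.
Proof. apply rng. destruct s3_facts as [_ [h1 h2]]. unfold rB. lra. Qed.
Lemma rS_rng : - (2 * PI * k) < -1/2 < 2 * PI * k.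
Proof. apply rng. lra. Qed.

Lemma dm_eq : delta_minus k = / (2 * PI) * acos (rA / (2 * PI * k)).
Proof. unfold delta_minus, rA, s3. f_equal. f_equal. pose proof PI_RGT_0. pose proof kpos. field. lra. Qed.
Lemma dp_eq : delta_plus k = / (2 * PI) * acos (rB / (2 * PI * k)).
Proof. unfold delta_plus, rB, s3. f_equal. f_equal. pose proof PI_RGT_0. pose proof kpos. field. lra. Qed.
Lemma ds_eq : delta_star k = / (2 * PI) * acos ((-1/2) / (2 * PI * k)).
Proof. unfold delta_star. f_equal. f_equal. pose proof PI_RGT_0. pose proof kpos. field. lra. Qed.

Notation dm := (delta_minus k).
Notation dp := (delta_plus k).
Notation ds := (delta_star k).

Lemma dm_range : 0 < dm < 1/2. Proof. rewrite dm_eq. exact (cs_range k rA kpos rA_rng). Qed.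
Lemma dp_range : 0 < dp < 1/2. Proof. rewrite dp_eq. exact (cs_range k rB kpos rB_rng). Qed.
Lemma ds_range : 0 < ds < 1/2. Proof. rewrite ds_eq. exact (cs_range k _ kpos rS_rng). Qed.
Lemma dm_val : psi_c k dm = rA. Proof. rewrite dm_eq. exact (cs_val k rA kpos rA_rng). Qed.
Lemma dp_val : psi_c k dp = rB. Proof. rewrite dp_eq. exact (cs_val k rB kpos rB_rng). Qed.
Lemma ds_val : psi_c k ds = -1/2. Proof. rewrite ds_eq. exact (cs_val k _ kpos rS_rng). Qed.
Lemma dm_val2 : psi_c k (1 - dm) = rA. Proof. rewrite dm_eq. exact (cs_val2 k rA kpos rA_rng). Qed.
Lemma dp_val2 : psi_c k (1 - dp) = rB. Proof. rewrite dp_eq. exact (cs_val2 k rB kpos rB_rng). Qed.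
Lemma ds_val2 : psi_c k (1 - ds) = -1/2. Proof. rewrite ds_eq. exact (cs_val2 k _ kpos rS_rng). Qed.

Lemma A_l1 y : 0 <= y -> y < dm -> rA < psi_c k y.
Proof. rewrite dm_eq. exact (cs_left1 k rA kpos rA_rng y). Qed.
Lemma A_l2 y : dm < y -> y <= 1/2 -> psi_c k y < rA.
Proof. rewrite dm_eq. exact (cs_left2 k rA kpos rA_rng y). Qed.
Lemma A_r1 y : 1/2 <= y -> y < 1 - dm -> psi_c k y < rA.
Proof. rewrite dm_eq. exact (cs_right1 k rA kpos rA_rng y). Qed.
Lemma A_r2 y : 1 - dm < y -> y <= 1 -> rA < psi_c k y.
Proof. rewrite dm_eq. exact (cs_right2 k rA kpos rA_rng y). Qed.
Lemma B_l1 y : 0 <= y -> y < dp -> rB < psi_c k y.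
Proof. rewrite dp_eq. exact (cs_left1 k rB kpos rB_rng y). Qed.
Lemma B_l2 y : dp < y -> y <= 1/2 -> psi_c k y < rB.
Proof. rewrite dp_eq. exact (cs_left2 k rB kpos rB_rng y). Qed.
Lemma B_r1 y : 1/2 <= y -> y < 1 - dp -> psi_c k y < rB.
Proof. rewrite dp_eq. exact (cs_right1 k rB kpos rB_rng y). Qed.
Lemma B_r2 y : 1 - dp < y -> y <= 1 -> rB < psi_c k y.
Proof. rewrite dp_eq. exact (cs_right2 k rB kpos rB_rng y). Qed.

Lemma dm_lt_dp : dm < dp.
Proof.
  pose proof dm_range. pose proof dp_range. pose proof rB_lt_rA.
  destruct (Rtotal_order dm dp) as [h|[h|h]]; auto.
  - pose proof dm_val. pose proof dp_val. rewrite h in *. lra.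
  - pose proof (A_l1 dp ltac:(lra) h). rewrite dp_val in H2. lra.
Qed.

Lemma TF_left y : 0 <= y <= 1/2 -> y <> dm -> y <> dp -> theta_formula k y = Hth (psi_c k y).
Proof.
  intros hy h1 h2. pose proof dm_range. pose proof dp_range. pose proof dm_lt_dp.
  unfold theta_formula.
  destruct (Rle_dec y dm).
  - rewrite H_5 by (apply A_l1; lra). reflexivity.
  - destruct (Rle_dec y dp).
    + rewrite H_3 by (split; [apply B_l1 | apply A_l2]; lra). reflexivity.
    + destruct (Rle_dec y (1 - dp)); [|lra].
      rewrite H_1 by (apply B_l2; lra). reflexivity.
Qed.

Lemma TF_right y : 1/2 <= y <= 1 -> y <> 1 - dm -> y <> 1 - dp -> theta_formula k y = Hth (psi_c k y).
Proof.
  intros hy h1 h2. pose proof dm_range. pose proof dp_range. pose proof dm_lt_dp.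
  unfold theta_formula.
  destruct (Rle_dec y dm); [lra|].
  destruct (Rle_dec y dp); [lra|].
  destruct (Rle_dec y (1 - dp)).
  - rewrite H_1 by (apply B_r1; lra). reflexivity.
  - destruct (Rle_dec y (1 - dm)).
    + rewrite H_3 by (split; [apply B_r2 | apply A_r1]; lra). reflexivity.
    + rewrite H_5 by (apply A_r2; lra). reflexivity.
Qed.

Lemma cont_at p M : exists d, 0 < d /\ forall y, Rabs (y - p) < d ->
  psi_c k p - eta_of M < psi_c k y < psi_c k p + eta_of M.
Proof.
  destruct (eta_facts M) as [e1 _].
  destruct (psi_cont k p (eta_of M) e1) as [d [hd Hd]].
  exists d. split; auto. intros y hy. specialize (Hd y hy).
  apply Rabs_def2 in Hd. lra.
Qed.

Lemma pole1 : left_limit (theta_formula k) dm = 3 * PI / 4.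
Proof.
  pose proof dm_range.
  replace (3 * PI / 4) with (PI + (-1) * PI / 4) by field.
  apply LL; [right; reflexivity| |].
  - exists dm. split; [lra|]. intros y hy. unfold theta_formula.
    destruct (Rle_dec y dm); [reflexivity|lra].
  - intros M. destruct (cont_at dm M) as [d [hd Hd]]. rewrite dm_val in Hd.
    exists (Rmin d dm). split; [apply Rmin_pos; lra|]. intros y hy.
    pose proof (Rmin_l d dm). pose proof (Rmin_r d dm).
    assert (ha : Rabs (y - dm) < d) by (rewrite Rabs_left by lra; lra).
    specialize (Hd y ha). pose proof (A_l1 y ltac:(lra) ltac:(lra)).
    pose proof (fA_above M (psi_c k y) ltac:(lra)). rewrite varphi_eq. lra.
Qed.

Lemma pole2 : left_limit (theta_formula k) dp = PI / 4.
Proof.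
  pose proof dm_range. pose proof dp_range. pose proof dm_lt_dp.
  replace (PI / 4) with (PI / 2 + (-1) * PI / 4) by field.
  apply LL; [right; reflexivity| |].
  - exists (dp - dm). split; [lra|]. intros y hy. unfold theta_formula.
    destruct (Rle_dec y dm); [lra|]. destruct (Rle_dec y dp); [reflexivity|lra].
  - intros M. destruct (cont_at dp M) as [d [hd Hd]]. rewrite dp_val in Hd.
    exists (Rmin d dp). split; [apply Rmin_pos; lra|]. intros y hy.
    pose proof (Rmin_l d dp). pose proof (Rmin_r d dp).
    assert (ha : Rabs (y - dp) < d) by (rewrite Rabs_left by lra; lra).
    specialize (Hd y ha). pose proof (B_l1 y ltac:(lra) ltac:(lra)).
    pose proof (fB_above M (psi_c k y) ltac:(lra)). rewrite varphi_eq. lra.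
Qed.

Lemma pole3 : left_limit (theta_formula k) (1 - dp) = PI / 4.
Proof.
  pose proof dm_range. pose proof dp_range. pose proof dm_lt_dp.
  replace (PI / 4) with (0 + 1 * PI / 4) by field.
  apply LL; [left; reflexivity| |].
  - exists (1 - 2 * dp). split; [lra|]. intros y hy. unfold theta_formula.
    destruct (Rle_dec y dm); [lra|]. destruct (Rle_dec y dp); [lra|].
    destruct (Rle_dec y (1 - dp)); [ring|lra].
  - intros M. destruct (cont_at (1 - dp) M) as [d [hd Hd]]. rewrite dp_val2 in Hd.
    exists (Rmin d (1/2 - dp)). split; [apply Rmin_pos; lra|]. intros y hy.
    pose proof (Rmin_l d (1/2 - dp)). pose proof (Rmin_r d (1/2 - dp)).
    assert (ha : Rabs (y - (1 - dp)) < d) by (rewrite Rabs_left by lra; lra).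
    specialize (Hd y ha). pose proof (B_r1 y ltac:(lra) ltac:(lra)).
    pose proof (fB_below M (psi_c k y) ltac:(lra)). rewrite varphi_eq. lra.
Qed.

Lemma pole4 : left_limit (theta_formula k) (1 - dm) = 3 * PI / 4.
Proof.
  pose proof dm_range. pose proof dp_range. pose proof dm_lt_dp.
  replace (3 * PI / 4) with (PI / 2 + 1 * PI / 4) by field.
  apply LL; [left; reflexivity| |].
  - exists (dp - dm). split; [lra|]. intros y hy. unfold theta_formula.
    destruct (Rle_dec y dm); [lra|]. destruct (Rle_dec y dp); [lra|].
    destruct (Rle_dec y (1 - dp)); [lra|].
    destruct (Rle_dec y (1 - dm)); [reflexivity|lra].
  - intros M. destruct (cont_at (1 - dm) M) as [d [hd Hd]]. rewrite dm_val2 in Hd.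
    exists (Rmin d (1/2 - dm)). split; [apply Rmin_pos; lra|]. intros y hy.
    pose proof (Rmin_l d (1/2 - dm)). pose proof (Rmin_r d (1/2 - dm)).
    assert (ha : Rabs (y - (1 - dm)) < d) by (rewrite Rabs_left by lra; lra).
    specialize (Hd y ha). pose proof (A_r1 y ltac:(lra) ltac:(lra)).
    pose proof (fA_below M (psi_c k y) ltac:(lra)). rewrite varphi_eq. lra.
Qed.

Lemma main_eq y : 0 <= y <= 1 -> theta1 k y = Hth (psi_c k y).
Proof.
  intros hy. pose proof dm_range. pose proof dp_range. pose proof dm_lt_dp.
  unfold theta1.
  destruct (Req_EM_T y dm) as [e|n1].
  { rewrite e, pole1, dm_val, H_rA. reflexivity. }
  destruct (Req_EM_T y dp) as [e|n2].
  { rewrite e, pole2, dp_val, H_rB. reflexivity. }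
  destruct (Req_EM_T y (1 - dp)) as [e|n3].
  { rewrite e, pole3, dp_val2, H_rB. reflexivity. }
  destruct (Req_EM_T y (1 - dm)) as [e|n4].
  { rewrite e, pole4, dm_val2, H_rA. reflexivity. }
  destruct (Rle_dec y (1/2)).
  - apply TF_left; auto; lra.
  - apply TF_right; auto; lra.
Qed.

End Main.

Lemma psi0 k : psi_c k 0 = 2 * PI * k.
Proof. unfold psi_c. rewrite Rmult_0_r, cos_0. ring. Qed.
Lemma psi1 k : psi_c k 1 = 2 * PI * k.
Proof. unfold psi_c. rewrite Rmult_1_r, cos_2PI. ring. Qed.
Lemma psih k : psi_c k (1/2) = - (2 * PI * k).
Proof. unfold psi_c. replace (2 * PI * (1/2)) with PI by field. rewrite cos_PI. ring. Qed.

Theorem mainTheorem3 :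
  exists K C : R, 0 < K /\ 0 < C /\
  forall k : R, K <= k ->
    (forall x y, 0 <= x -> x < y -> y <= 1 / 2 -> theta1 k y < theta1 k x) /\
    (forall x y, 1 / 2 <= x -> x < y -> y <= 1 -> theta1 k x < theta1 k y) /\
    theta1 k 0 = PI + / 2 * atan (varphi k 0) /\
    theta1 k 1 = PI + / 2 * atan (varphi k 0) /\
    Rabs (theta1 k 0 - PI) <= C / k /\
    theta1 k (1 / 2) = / 2 * atan (varphi k (1 / 2)) /\
    Rabs (theta1 k (1 / 2)) <= C / k /\
    theta1 k (delta_minus k) = 3 * PI / 4 /\
    theta1 k (1 - delta_minus k) = 3 * PI / 4 /\
    theta1 k (delta_star k) = PI / 2 /\
    theta1 k (1 - delta_star k) = PI / 2 /\
    theta1 k (delta_plus k) = PI / 4 /\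
    theta1 k (1 - delta_plus k) = PI / 4.
Proof.
  exists 1, 1. split; [lra|]. split; [lra|]. intros k hk.
  pose proof PI_RGT_0. pose proof PI2_3_2.
  pose proof (dm_range k hk). pose proof (dp_range k hk). pose proof (ds_range k hk).
  destruct s3_facts as [hs [hs1 hs2]].
  assert (hA : rA < 2 * PI * k) by (unfold rA; nra).
  assert (hB : - (2 * PI * k) < rB) by (unfold rB; nra).
  assert (hS : rB < -1/2 < rA) by (unfold rA, rB; lra).
  assert (e0 : theta1 k 0 = PI + / 2 * atan (varphi k 0)).
  { rewrite (main_eq k hk) by lra. rewrite (H_5 (psi_c k 0)) by (rewrite psi0; lra). reflexivity. }
  assert (eh : theta1 k (1/2) = / 2 * atan (varphi k (1/2))).
  { rewrite (main_eq k hk) by lra. rewrite (H_1 (psi_c k (1/2))) by (rewrite psih; lra). reflexivity. }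
  assert (fS : fphi (-1/2) = 0) by (unfold fphi; field; lra).
  split; [|split; [|split; [exact e0|split; [|split; [|split; [exact eh|split; [|split; [|split; [|split; [|split; [|split]]]]]]]]]]].
  - intros x y hx hxy hy. rewrite !(main_eq k hk) by lra. apply H_incr.
    unfold psi_c. apply Rmult_lt_compat_l; [nra|]. apply cos_decreasing_1; nra.
  - intros x y hx hxy hy. rewrite !(main_eq k hk) by lra. apply H_incr.
    unfold psi_c. apply Rmult_lt_compat_l; [nra|]. apply cos_increasing_1; nra.
  - rewrite (main_eq k hk) by lra. rewrite (H_5 (psi_c k 1)) by (rewrite psi1; lra). rewrite varphi_eq, psi0, psi1. reflexivity.
  - rewrite e0. replace (PI + / 2 * atan (varphi k 0) - PI) with (/ 2 * atan (varphi k 0)) by ring.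
    rewrite Rabs_mult, Rabs_right by lra.
    pose proof (atan_abs (varphi k 0)).
    assert (Rabs (varphi k 0) <= 1 / k).
    { rewrite varphi_eq, psi0. set (P := 2 * PI * k).
      assert (hP : 6 <= P) by (unfold P; nra).
      assert (fphi P = - ((4 * P + 2) / (2 * P ^ 2 + 2 * P - 1))) by (unfold fphi; field; nra).
      rewrite H5, Rabs_Ropp, Rabs_right.
      - apply div_le_inv; [nra|lra|]. unfold P. nra.
      - left. apply div_pos_lt; nra. }
    pose proof (Rabs_pos (atan (varphi k 0))). pose proof (Rabs_pos (atan (varphi k (1/2)))). lra.
  - rewrite eh. rewrite Rabs_mult, (Rabs_right (/2)) by lra.
    pose proof (atan_abs (varphi k (1/2))).
    assert (Rabs (varphi k (1/2)) <= 1 / k).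
    { rewrite varphi_eq, psih. set (P := 2 * PI * k).
      assert (hP : 6 <= P) by (unfold P; nra).
      assert (fphi (-P) = (4 * P - 2) / (2 * P ^ 2 - 2 * P - 1)) by (unfold fphi; field; repeat split; nra).
      assert (hP6 : 6 * k <= P) by (unfold P; nra).
      rewrite H5, Rabs_right.
      - apply div_le_inv; [nra|lra|]. nra.
      - left. apply div_pos_lt; nra. }
    pose proof (Rabs_pos (atan (varphi k 0))). pose proof (Rabs_pos (atan (varphi k (1/2)))). lra.
  - rewrite (main_eq k hk) by lra. rewrite (dm_val k hk). apply H_rA.
  - rewrite (main_eq k hk) by lra. rewrite (dm_val2 k hk). apply H_rA.
  - rewrite (main_eq k hk) by lra. rewrite (ds_val k hk), H_3 by lra. rewrite fS, atan_0. ring.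
  - rewrite (main_eq k hk) by lra. rewrite (ds_val2 k hk), H_3 by lra. rewrite fS, atan_0. ring.
  - rewrite (main_eq k hk) by lra. rewrite (dp_val k hk). apply H_rB.
  - rewrite (main_eq k hk) by lra. rewrite (dp_val2 k hk). apply H_rB.
Qed.
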